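(* Let pieces have length $a=2$ and let $m\geq 1$. There is a bijective correspondence between positive $(2m,m)$-strings and right $0$-pyramids of size $m$.
   Context: A string is a finite sequence of $0$'s and $1$'s; an $(n,m)$-string is a string of length $n$ containing exactly $m$ $1$'s. A $(2m,m)$-string $x_1x_2\dots x_{2m}$ is positive if $t_s=\sum_{u=1}^s(2x_u-1)\geq 0$ for all $s=1,\dots,2m$. A piece is an open interval $]s,s+2[$ with $s\in\mathbb Z$; two pieces are concurrent iff their intervals intersect. A heap is a finite configuration obtained by successively dropping pieces vertically towards the horizontal axis, each coming to rest on the axis or on the highest previously placed piece whose interval meets its own (configurations, not dropping orders, are counted). A pyramid is a heap with a unique bottom piece (exactly one piece on the axis); its size is its number of pieces. A right $0$-pyramid is a pyramid whose bottom piece covers $]0,2[$ and is a leftmost piece (no piece covers $]t,t+2[$ with $t<0$). *)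

(* Defs.v *)
From HB Require Import structures.
From mathcomp Require Import all_boot all_algebra.
From mathcomp Require Import finmap.
Set Implicit Arguments. Unset Strict Implicit. Unset Printing Implicit Defensive.
Import GRing.Theory Num.Theory.
Local Open Scope fset_scope.

Definition nm_string (n m : nat) (x : seq bool) : bool :=
  (size x == n) && (count id x == m).

Definition tsum (x : seq bool) (s : nat) : int :=
  (\sum_(u <- take s x) ((2 * nat_of_bool u)%:Z - 1))%R.

Definition positive_string (m : nat) (x : seq bool) : Prop :=
  nm_string (2 * m) m x /\ forall s : nat, 1 <= s <= 2 * m -> (0 <= tsum x s)%R.

Definition PosString (m : nat) := {x : seq bool | positive_string m x}.

(** Pieces and heaps.  A piece ]s,s+2[ placed at height h (0 = on the axis)
    is represented by the pair (s, h). *)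
Definition concurrent (s t : int) : bool := (`|s - t| < 2)%R.

Definition drop_height (C : seq (int * nat)) (s : int) : nat :=
  foldr (fun p acc => if concurrent p.1 s then maxn acc p.2.+1 else acc) 0 C.

Definition drop (C : seq (int * nat)) (s : int) : seq (int * nat) :=
  (s, drop_height C s) :: C.

Definition drop_all (ds : seq int) : seq (int * nat) := foldl drop [::] ds.

Definition is_heap (H : {fset (int * nat)}) : Prop :=
  exists ds : seq int, [fset p | p in drop_all ds] = H.

Definition bottom_pieces (H : {fset (int * nat)}) : {fset (int * nat)} :=
  [fset p in H | p.2 == 0%N].

Definition is_pyramid (H : {fset (int * nat)}) : Prop :=
  is_heap H /\ #|` bottom_pieces H| = 1%N.

Definition size_heap (H : {fset (int * nat)}) : nat := #|` H|.

(* right 0-pyramid: bottom piece covers ]0,2[ and it is a leftmost piece *)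
Definition is_right0pyramid (H : {fset (int * nat)}) : Prop :=
  is_pyramid H /\ bottom_pieces H = [fset (0%Z, 0%N)]
  /\ (forall p, p \in H -> (0 <= p.1)%R).

Definition RightPyramid (m : nat) :=
  {H : {fset (int * nat)} | is_right0pyramid H /\ size_heap H = m}.

(* Main.v *)
Require Import Defs.
From HB Require Import structures.
From mathcomp Require Import all_boot all_algebra.
From mathcomp Require Import finmap zify.
From Stdlib Require ProofIrrelevance ClassicalEpsilon.
Import GRing.Theory Num.Theory.
Set Implicit Arguments. Unset Strict Implicit. Unset Printing Implicit Defensive.

Fixpoint dyck (L : nat) (x : seq bool) : bool :=
  match x with
  | [::] => L == 0
  | b :: x' => if b then dyck L.+1 x' else (0 < L) && dyck L.-1 x'
  end.

Fixpoint enc (L : nat) (x : seq bool) : seq nat :=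
  match x with
  | [::] => [::]
  | b :: x' => if b then L :: enc L.+1 x' else enc L.-1 x'
  end.

Fixpoint D (L : nat) (w : seq nat) : seq bool :=
  match w with
  | [::] => nseq L false
  | a :: w' => nseq (L - a) false ++ true :: D a.+1 w'
  end.

Definition stepr (a b : nat) := b <= a.+1.
Definition valid (w : seq nat) := (head 1 w == 0) && sorted stepr w.

Lemma tsum0 x : tsum x 0 = 0%R.
Proof. by rewrite /tsum take0 big_nil. Qed.

Lemma tsumS b x s : tsum (b :: x) s.+1 = ((if b then 1 else -1) + tsum x s)%R.
Proof. by rewrite /tsum /= big_cons; case: b. Qed.

Lemma tsum_big x s : size x <= s -> tsum x s = tsum x (size x).
Proof. by move=> h; rewrite /tsum take_size take_oversize. Qed.

Lemma tsum_size x : tsum x (size x) = ((2 * count id x)%:Z - (size x)%:Z)%R.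
Proof.
elim: x => [|b x IH]; first by rewrite tsum0.
rewrite /= tsumS IH; case: b => /=; lia.
Qed.

Lemma dyck_tsum L x : dyck L x ->
  (forall s, (0 <= L%:Z + tsum x s)%R) /\ (L%:Z + tsum x (size x) = 0)%R.
Proof.
elim: x L => [|b x IH] L /=.
  move=> /eqP ->; split; last by rewrite tsum0.
  by move=> s; rewrite /tsum take_oversize // big_nil.
case: b.
  move=> /IH [h1 h2]; split.
    case=> [|s]; first by rewrite tsum0; lia.
    rewrite tsumS; move: (h1 s); lia.
  rewrite tsumS; move: h2; lia.
move=> /andP [hL /IH [h1 h2]]; split.
  case=> [|s]; first by rewrite tsum0; lia.
  rewrite tsumS; move: (h1 s); lia.
rewrite tsumS; move: h2; lia.
Qed.

Lemma tsum_dyck L x :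
  (forall s, s <= size x -> (0 <= L%:Z + tsum x s)%R) ->
  (L%:Z + tsum x (size x) = 0)%R -> dyck L x.
Proof.
elim: x L => [|b x IH] L /=.
  by rewrite tsum0 => _ h; apply/eqP; lia.
move=> h1 h2; case: b h1 h2 => h1 h2.
  apply: IH.
    move=> s hs; move: (h1 s.+1 hs); rewrite tsumS; lia.
  move: h2; rewrite tsumS; lia.
have h0 := h1 1 erefl; rewrite tsumS tsum0 in h0.
apply/andP; split; first lia.
apply: IH.
  move=> s hs; move: (h1 s.+1 hs); rewrite tsumS; lia.
move: h2; rewrite tsumS; lia.
Qed.

Lemma pos_dyck m x : positive_string m x <-> dyck 0 x /\ size x = 2 * m.
Proof.
split.
  case=> /andP [/eqP hs /eqP hc] hp; split=> //.
  apply: tsum_dyck.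
    move=> s _; case: s => [|s]; first by rewrite tsum0.
    case: (leqP s.+1 (2 * m)) => h; first by move: (hp s.+1 (andb_true_intro (conj erefl h))); lia.
    rewrite tsum_big; last lia.
    rewrite tsum_size hs hc; lia.
  rewrite tsum_size hs hc; lia.
case=> hd hs; have [h1 h2] := @dyck_tsum 0 x hd.
rewrite tsum_size hs in h2.
split; first by rewrite /nm_string hs eqxx /=; apply/eqP; lia.
move=> s _; move: (h1 s); lia.
Qed.

Lemma enc_head L x a w : enc L x = a :: w -> a <= L.
Proof.
elim: x L => [|b x IH] L //=; case: b.
  by case=> -> _.
move=> /IH; lia.
Qed.

Lemma enc_sorted L x : sorted stepr (enc L x).
Proof.
elim: x L => [|b x IH] L //=; case: b => //=.
case E: (enc L.+1 x) => [|a w] //=.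
have := IH L.+1; rewrite E /= => ->; rewrite andbT /stepr; have := enc_head E; lia.
Qed.

Lemma enc_size L x : size (enc L x) = count id x.
Proof. by elim: x L => [|b x IH] L //=; case: b => /=; rewrite IH. Qed.

Lemma D_false L w : (forall a w', w = a :: w' -> a <= L) -> D L.+1 w = false :: D L w.
Proof.
case: w => [|a w] //= h.
by have := h a w erefl => ha; rewrite subSn.
Qed.

Lemma dec_enc L x : dyck L x -> D L (enc L x) = x.
Proof.
elim: x L => [|b x IH] L /=.
  by move=> /eqP ->.
case: b.
  by move=> /IH /= ->; rewrite subnn.
move=> /andP [hL /IH hx].
case: L hL hx => [|L] // _ /= hx.
rewrite D_false ?hx //.
move=> a w; exact: enc_head.
Qed.

Lemma enc_nseq L k y : enc L (nseq k false ++ y) = enc (L - k) y.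
Proof.
elim: k L => [|k IH] L /=; first by rewrite subn0.
by rewrite IH; congr enc; lia.
Qed.

Lemma dyck_nseq L k y : dyck L (nseq k false ++ y) = (k <= L) && dyck (L - k) y.
Proof.
elim: k L => [|k IH] L /=; first by rewrite subn0.
by rewrite IH; case: L => [|L] //=.
Qed.

Lemma D_spec w L : sorted stepr w -> (forall a w', w = a :: w' -> a <= L) ->
  [/\ dyck L (D L w), enc L (D L w) = w & size (D L w) = L + 2 * size w].
Proof.
elim: w L => [|a w IH] L /=.
  move=> _ _; split.
  - by elim: L => //= L ->.
  - by elim: L => //.
  - by rewrite size_nseq addn0.
move=> hs ha; have aL := ha a w erefl.
have hs' : sorted stepr w by case: (w) hs => //= b w0 /andP [].
have hw : forall b w', w = b :: w' -> b <= a.+1.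
  by move=> b w' E; move: hs; rewrite E /= => /andP [].
have [h1 h2 h3] := IH a.+1 hs' hw.
split.
- rewrite dyck_nseq (_ : L - (L - a) = a) /=; last lia.
  by rewrite h1 andbT; lia.
- by rewrite enc_nseq (_ : L - (L - a) = a) /=; [rewrite h2 | lia].
- by rewrite size_cat size_nseq /= h3; lia.
Qed.

Notation P := (int * nat)%type.

Lemma concC a b : concurrent a b = concurrent b a.
Proof. by rewrite /concurrent -normrN opprB. Qed.

Lemma dh_cons q C s : drop_height (q :: C) s =
  if concurrent q.1 s then maxn (drop_height C s) q.2.+1 else drop_height C s.
Proof. by []. Qed.

Lemma dh_lt C s (p : P) : p \in C -> concurrent p.1 s -> p.2 < drop_height C s.
Proof.
elim: C => // q C IH; rewrite inE dh_cons => /orP [/eqP -> | hp] hc.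
  rewrite hc; lia.
have := IH hp hc; case: ifP => _; lia.
Qed.

Lemma dh_sup C s : drop_height C s = 0 \/
  exists2 p : P, p \in C & concurrent p.1 s /\ p.2.+1 = drop_height C s.
Proof.
elim: C => [|q C IH]; first by left.
rewrite dh_cons; case: ifP => hc; last first.
  case: IH => [-> |[p hp hp2]]; first by left.
  by right; exists p => //; rewrite inE hp orbT.
right; case: (leqP (drop_height C s) q.2.+1) => hle.
  by exists q; [rewrite inE eqxx | split=> //; lia].
case: IH => [E |[p hp [hp1 hp2]]]; first lia.
by exists p; [rewrite inE hp orbT | split=> //; lia].
Qed.

Arguments dh_sup : clear implicits.

Lemma dh_uniq C s h : (forall p : P, p \in C -> concurrent p.1 s -> p.2 < h) ->
  (h = 0 \/ exists2 p : P, p \in C & concurrent p.1 s /\ p.2.+1 = h) ->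
  drop_height C s = h.
Proof.
move=> h1 h2.
have := dh_sup C s; case => [E|[p hp [hc hE]]].
  case: h2 => [-> //|]; case=> q hq [hc' hE']; have := dh_lt hq hc'; lia.
have := h1 p hp hc.
case: h2 => [E|[q hq [hc' hE']]]; first lia.
have := dh_lt hq hc'; lia.
Qed.

Lemma da_rcons ds x : drop_all (rcons ds x) = Defs.drop (drop_all ds) x.
Proof. by rewrite /drop_all -cats1 foldl_cat. Qed.

Lemma da_nil : drop_all [::] = [::].
Proof. by []. Qed.

Lemma da_mem ds (p : P) : p \in drop_all ds -> p.1 \in ds.
Proof.
elim/last_ind: ds => // ds x IH; rewrite da_rcons inE => /orP [/eqP -> | /IH h].
  by rewrite mem_rcons inE eqxx.
by rewrite mem_rcons inE h orbT.
Qed.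

Lemma da_ex ds x : x \in ds -> exists h, (x, h) \in drop_all ds.
Proof.
elim/last_ind: ds => // ds y IH; rewrite mem_rcons inE da_rcons => /orP [/eqP -> | /IH [h hh]].
  by exists (drop_height (drop_all ds) y); rewrite inE eqxx.
by exists h; rewrite inE hh orbT.
Qed.

Lemma da_inv ds :
  [/\ uniq (drop_all ds), size (drop_all ds) = size ds,
   (forall p q : P, p \in drop_all ds -> q \in drop_all ds -> concurrent p.1 q.1 -> p.2 = q.2 -> p = q)
 & (forall p : P, p \in drop_all ds -> 0 < p.2 ->
     exists2 q : P, q \in drop_all ds & concurrent q.1 p.1 /\ q.2.+1 = p.2)].
Proof.
elim/last_ind: ds => [|ds x [IH1 IH2 IH3 IH4]]; first by split.
rewrite da_rcons size_rcons /Defs.drop /=.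
set h := drop_height (drop_all ds) x.
have self : concurrent x x by rewrite /concurrent subrr.
split.
- rewrite IH1 andbT; apply/negP => hin.
  have := dh_lt hin self; rewrite /h /=; lia.
- by rewrite IH2.
- move=> p q; rewrite !inE => /orP [/eqP -> | hp] /orP [/eqP -> | hq] //= hc he.
  + rewrite concC in hc; have := dh_lt hq hc; rewrite -/h; lia.
  + have := dh_lt hp hc; rewrite -/h; lia.
  + exact: IH3.
- move=> p; rewrite inE => /orP [/eqP -> | hp] /= hpos.
  + case: (dh_sup (drop_all ds) x); rewrite -/h; first lia.
    by case=> q hq [hc he]; exists q; [rewrite inE hq orbT | ].
  + by have [q hq hq2] := IH4 p hp hpos; exists q => //; rewrite inE hq orbT.
Qed.

Lemma fold_sub v C (r : P) : r \in C -> r \in foldl Defs.drop C v.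
Proof.
elim: v C => // z v IH C hr /=; apply: IH; by rewrite inE hr orbT.
Qed.

Lemma fold_high v C (r : P) z : r \in C -> z \in v -> concurrent r.1 z ->
  exists2 r' : P, r' \in foldl Defs.drop C v & r'.1 = z /\ r.2 < r'.2.
Proof.
elim: v C => // z' v IH C hr; rewrite inE => /orP [/eqP <- | hz] hc /=.
  exists (z, drop_height C z); last by split=> //=; exact: (dh_lt hr hc).
  by apply: fold_sub; rewrite inE eqxx.
by apply: IH => //; rewrite inE hr orbT.
Qed.

Lemma da_dec w (r : P) : r \in drop_all (map Posz w) -> exists u y v,
  [/\ w = u ++ y :: v, r \in drop_all (map Posz (rcons u y)) & r.1 = Posz y].
Proof.
elim/last_ind: w => // w x IH; rewrite map_rcons da_rcons inE => /orP [/eqP -> | hr].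
  exists w, x, [::]; split=> //; first by rewrite cats1.
  by rewrite map_rcons da_rcons inE eqxx.
have [u [y [v [E h1 h2]]]] := IH hr.
by exists u, y, (rcons v x); split=> //; rewrite E rcons_cat.
Qed.

Lemma ivt x s t : path stepr x s -> x <= t <= last x s -> t \in x :: s.
Proof.
elim: s x => [|y s IH] x /=.
  by move=> _ h; rewrite inE; apply/eqP; lia.
move=> /andP [hxy hp] ht; rewrite inE; case: (eqVneq t x) => //= ne.
apply: IH => //; rewrite /stepr in hxy; lia.
Qed.

Local Open Scope fset_scope.

Lemma LP w0 l : sorted stepr (rcons w0 l) ->
  [/\ drop_all (map Posz (rcons w0 l)) =
        (Posz l, drop_height (drop_all (map Posz w0)) (Posz l)) :: drop_all (map Posz w0),
      (forall r : P, r \in drop_all (map Posz (rcons w0 l)) -> concurrent r.1 (Posz l) ->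
          r.2 <= drop_height (drop_all (map Posz w0)) (Posz l)) &
      (forall r : P, r \in drop_all (map Posz (rcons w0 l)) ->
          r != (Posz l, drop_height (drop_all (map Posz w0)) (Posz l)) ->
          (forall q : P, q \in drop_all (map Posz (rcons w0 l)) -> concurrent q.1 r.1 -> q.2 <= r.2) ->
          (Posz l < r.1)%R)].
Proof.
move=> hs.
set h := drop_height (drop_all (map Posz w0)) (Posz l).
have EC : drop_all (map Posz (rcons w0 l)) = (Posz l, h) :: drop_all (map Posz w0).
  by rewrite map_rcons da_rcons.
split=> //; rewrite EC.
- move=> r; rewrite inE => /orP [/eqP -> //| hr] hc.
  have := dh_lt hr hc; rewrite -/h; lia.
- move=> r; rewrite inE => /orP [/eqP -> | hr]; first by rewrite eqxx.
  move=> _ hmax.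
  have nc : ~~ concurrent r.1 (Posz l).
    apply/negP => hc; have := dh_lt hr hc; rewrite -/h.
    have := hmax (Posz l, h) ltac:(by rewrite inE eqxx); rewrite concC => /(_ hc) /=; lia.
  have [u [y [v [E hr1 hr2]]]] := da_dec hr.
  rewrite hr2 in nc hmax *.
  move: nc; rewrite /concurrent => nc.
  case: (ltnP l y) => hly; first lia.
  have hyl : y.+2 <= l by lia.
  have hp : path stepr y (rcons v l).
    by move: hs; rewrite E rcons_cat /= sorted_cat_cons => /andP [].
  have := ivt (t := y.+1) hp; rewrite last_rcons => /(_ ltac:(lia)).
  rewrite inE mem_rcons inE => /orP [/eqP|/orP [/eqP|hv]]; try lia.
  have hC : drop_all (map Posz w0) =
      foldl Defs.drop (drop_all (map Posz (rcons u y))) (map Posz v).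
    by rewrite E map_cat /= /drop_all foldl_cat map_rcons -cats1 foldl_cat.
  have hc : concurrent r.1 (Posz y.+1) by rewrite hr2 /concurrent; lia.
  have [r' hr' [h1 h2]] := fold_high hr1 (map_f Posz hv) hc.
  rewrite -hC in hr'.
  have hcc : concurrent r'.1 (Posz y) by rewrite h1 /concurrent; lia.
  have := hmax r' ltac:(by rewrite inE hr' orbT) hcc; lia.
Qed.

Lemma valid_rcons w x : valid (rcons w x) -> w != [::] ->
  valid w /\ x <= (last 0 w).+1.
Proof.
case: w => [|a w] //= /andP [ha]; rewrite /= rcons_path => /andP [h1 h2] _.
by rewrite /valid /= ha h1.
Qed.

Lemma valid_bot w : valid w ->
  (Posz 0, 0) \in drop_all (map Posz w) /\
  forall p : P, p \in drop_all (map Posz w) -> p.2 = 0 -> p = (Posz 0, 0).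
Proof.
elim/last_ind: w => [|w x IH] //.
case: (eqVneq w [::]) => [-> | nw].
  move=> /andP [/= /eqP -> _]; split; first by rewrite /= inE.
  by move=> p; rewrite /= inE => /eqP ->.
move=> hv; have [hw hx] := valid_rcons hv nw.
have [IH1 IH2] := IH hw.
rewrite map_rcons da_rcons /Defs.drop; split; first by rewrite inE IH1 orbT.
have hpos : 0 < drop_height (drop_all (map Posz w)) (Posz x).
  case: w nw hw hx {IH IH1 IH2 hv} => [//|a w] _ /andP [/= /eqP ha hs] hx.
  subst a.
  have [z hz hzx] : exists2 z, z \in 0 :: w & concurrent (Posz z) (Posz x).
    case: x hx => [|x] hx; first by exists 0; rewrite ?inE // /concurrent.
    exists x; last by rewrite /concurrent; lia.
    by apply: ivt hs _; apply/andP; split; lia.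
  have [hh hin] := da_ex (map_f Posz hz).
  have := dh_lt hin hzx; rewrite /=; lia.
move=> p; rewrite inE => /orP [/eqP -> /= | hp]; first lia.
exact: IH2.
Qed.

Lemma valid_pyr w : valid w ->
  is_right0pyramid [fset p | p in drop_all (map Posz w)] /\
  size_heap [fset p | p in drop_all (map Posz w)] = size w.
Proof.
move=> hv; have [b1 b2] := valid_bot hv.
have [u sz _ _] := da_inv (map Posz w).
have hb : bottom_pieces [fset p | p in drop_all (map Posz w)] = [fset (Posz 0, 0)].
  apply/fsetP => p; rewrite !inE; apply/idP/idP.
    by move=> /andP [hp /eqP h0]; rewrite (b2 p hp h0).
  by move=> /eqP ->; rewrite b1.
split; last by rewrite /size_heap card_fseq undup_id // sz size_map.
split; [split | split] => //.
- by exists (map Posz w).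
- by rewrite hb cardfs1.
- move=> p; rewrite inE => /da_mem /mapP [z _ ->]; lia.
Qed.

Lemma valid_single w : valid w -> size w = 1 -> w = [:: 0].
Proof. by case: w => [|a [|b w]] //; rewrite /valid /= => /andP [/eqP ->]. Qed.

Lemma inj_words n : forall w1 w2, valid w1 -> valid w2 -> size w1 = n.+1 -> size w2 = n.+1 ->
  drop_all (map Posz w1) =i drop_all (map Posz w2) -> w1 = w2.
Proof.
elim: n => [|n IH] w1 w2 v1 v2 s1 s2 E.
  by rewrite (valid_single v1 s1) (valid_single v2 s2).
case/lastP: w1 v1 s1 E => [//|u1 l1] v1 s1.
case/lastP: w2 v2 s2 => [//|u2 l2] v2 s2 E.
have nu1 : u1 != [::] by case: (u1) s1; rewrite ?size_rcons.
have nu2 : u2 != [::] by case: (u2) s2; rewrite ?size_rcons.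
have [vu1 _] := valid_rcons v1 nu1.
have [vu2 _] := valid_rcons v2 nu2.
have [L1a L1b L1c] := LP (andP v1).2.
have [L2a L2b L2c] := LP (andP v2).2.
set h1 := drop_height _ (Posz l1) in L1a L1b L1c.
set h2 := drop_height _ (Posz l2) in L2a L2b L2c.
have t1in : (Posz l1, h1) \in drop_all (map Posz (rcons u1 l1)) by rewrite L1a inE eqxx.
have t2in : (Posz l2, h2) \in drop_all (map Posz (rcons u2 l2)) by rewrite L2a inE eqxx.
have et : (Posz l1, h1) = (Posz l2, h2).
  apply/eqP; apply/negPn/negP => ne.
  have a1 := L1c (Posz l2, h2) ltac:(by rewrite E) ltac:(by rewrite eq_sym).
  have a2 := L2c (Posz l1, h1) ltac:(by rewrite -E) ne.
  have := a1 (fun q hq hc => L2b q ltac:(by rewrite -E) hc).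
  have := a2 (fun q hq hc => L1b q ltac:(by rewrite E) hc).
  rewrite /=; lia.
case: et => el eh; subst l2.
have [U1 _ _ _] := da_inv (map Posz (rcons u1 l1)).
have [U2 _ _ _] := da_inv (map Posz (rcons u2 l1)).
rewrite L1a /= in U1; rewrite L2a /= in U2.
case/andP: U1 => n1 _; case/andP: U2 => n2 _.
congr rcons; apply: IH => //.
- by move: s1; rewrite size_rcons => -[].
- by move: s2; rewrite size_rcons => -[].
have n2' : (Posz l1, h1) \notin drop_all (map Posz u2) by rewrite eh.
move=> p; have := E p; rewrite L1a L2a !inE.
case: (eqVneq p (Posz l1, h1)) => [-> | ne] /=.
  by rewrite (negbTE n1) (negbTE n2').
have ne2 : p != (Posz l1, h2) by rewrite -eh.
by rewrite (negbTE ne2).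
Qed.

Definition PA (H : {fset P}) := forall p q : P, p \in H -> q \in H ->
  concurrent p.1 q.1 -> p.2 = q.2 -> p = q.
Definition PB (H : {fset P}) := forall p : P, p \in H -> 0 < p.2 ->
  exists2 q : P, q \in H & concurrent q.1 p.1 /\ q.2.+1 = p.2.

Definition maxb (H : {fset P}) (p : P) :=
  all (fun r : P => concurrent r.1 p.1 ==> (r.2 <= p.2)) (enum_fset H).

Lemma maxbP H p : reflect (forall r : P, r \in H -> concurrent r.1 p.1 -> r.2 <= p.2) (maxb H p).
Proof.
apply: (iffP allP) => h r hr.
  by move=> hc; exact: (implyP (h r hr) hc).
by apply/implyP; exact: h r hr.
Qed.

Lemma argmin (f : P -> int) (l : seq P) (x0 : P) : x0 \in l ->
  exists2 p : P, p \in l & forall q : P, q \in l -> (f p <= f q)%R.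
Proof.
elim: l x0 => // a l IH x0 _.
case: l IH => [|b l] IH.
  by exists a => [|q]; rewrite ?inE // => /eqP ->.
have [p hp hmin] := IH b (mem_head _ _).
case: (lerP (f a) (f p)) => h.
  exists a; first exact: mem_head.
  move=> q; rewrite inE => /orP [/eqP -> // | /hmin]; lia.
exists p; first by rewrite inE hp orbT.
move=> q; rewrite inE => /orP [/eqP -> | /hmin //]; lia.
Qed.

Lemma head_rcons (s : seq nat) x d : s != [::] -> head d (rcons s x) = head d s.
Proof. by case: s. Qed.

Lemma valid_rcons2 w x : valid w -> stepr (last 0 w) x -> valid (rcons w x).
Proof.
case: w => [|a w] // /andP [ha hs] hx; move: hs => /= hs.
move: ha => /= /eqP ha; subst a.
by rewrite /valid /= rcons_path hs hx.
Qed.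

Lemma bot_facts (H : {fset P}) : bottom_pieces H = [fset (Posz 0, 0)] ->
  (Posz 0, 0) \in H /\ forall p : P, p \in H -> p.2 = 0 -> p = (Posz 0, 0).
Proof.
move=> bot; split.
  have : (Posz 0, 0) \in bottom_pieces H by rewrite bot inE.
  by rewrite !inE => /andP [].
move=> p hp h0; have : p \in bottom_pieces H by rewrite !inE hp h0 eqxx.
by rewrite bot inE => /eqP.
Qed.

Lemma surj_words n : forall H : {fset P}, #|` H| = n.+1 -> PA H -> PB H ->
  (forall p : P, p \in H -> (0 <= p.1)%R) -> bottom_pieces H = [fset (Posz 0, 0)] ->
  exists w, [/\ valid w, size w = n.+1 & drop_all (map Posz w) =i H].
Proof.
elim: n => [|n IH] H hc pa pb pos bot;
  have [h00 hbot] := bot_facts bot;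
  have hcD := cardfsD1 (Posz 0, 0) H; rewrite h00 hc in hcD.
  exists [:: 0]; split=> // p; rewrite /= inE.
  apply/idP/idP => [/eqP -> // | hp].
  apply/negPn/negP => ne.
  have E0 : H `\ (Posz 0, 0) = fset0 by apply: cardfs0_eq; lia.
  have : p \in H `\ (Posz 0, 0) by rewrite in_fsetD1 ne hp.
  by rewrite E0 inE.
have [q0 hq0] : exists q : P, q \in H `\ (Posz 0, 0).
  by apply/fset0Pn; rewrite -cardfs_gt0; lia.
move: hq0; rewrite in_fsetD1 => /andP [nq0 hq0].
have [p0 hp0 hmax0] := argmin (fun p : P => - (p.2 : int))%R h00.
have mp0 : maxb H p0.
  apply/maxbP => r hr _; have := hmax0 r hr; lia.
set M := [seq p <- enum_fset H | maxb H p].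
have hp0M : p0 \in M by rewrite mem_filter mp0.
have [p hpM hmin] := argmin (fun p : P => p.1) hp0M.
move: hpM; rewrite mem_filter => /andP [/maxbP mp hp].
have hmin' : forall q : P, q \in H -> maxb H q -> (p.1 <= q.1)%R.
  by move=> q hq mq; apply: hmin; rewrite mem_filter mq.
have down : forall k (q : P), q \in H -> q.2 = k.+1 -> exists2 r : P, r \in H & r.2 = 1.
  elim=> [|k IHk] q hq hq2; first by exists q.
  have [r hr [_ hr2]] := pb q hq ltac:(lia).
  by apply: (IHk r hr); lia.
have pp : 0 < p.2.
  case: (posnP p.2) => // h0.
  have Ep := hbot p hp h0.
  have q0pos : 0 < q0.2.
    case: (posnP q0.2) => // e; by rewrite (hbot q0 hq0 e) eqxx in nq0.
  have [r hr r1] := down q0.2.-1 q0 hq0 ltac:(lia).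
  have [s hs [hsc hs2]] := pb r hr ltac:(lia).
  have Es := hbot s hs ltac:(lia).
  rewrite Es in hsc.
  have := mp r hr; rewrite Ep concC => /(_ hsc) /= hle; exfalso; lia.
set H' := H `\ p.
have hc' : #|` H'| = n.+1 by have := cardfsD1 p H; rewrite hp hc /H' /=; lia.
have pa' : PA H'.
  move=> a b; rewrite !in_fsetD1 => /andP [_ ha] /andP [_ hb]; exact: pa.
have pb' : PB H'.
  move=> a; rewrite in_fsetD1 => /andP [na ha] apos.
  have [b hb [hbc hb2]] := pb a ha apos.
  exists b => //; rewrite in_fsetD1 hb andbT; apply/negP => /eqP Eb.
  have := mp a ha; rewrite concC -Eb => /(_ hbc); lia.
have pos' : forall q : P, q \in H' -> (0 <= q.1)%R.
  by move=> q; rewrite in_fsetD1 => /andP [_ /pos].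
have bot' : bottom_pieces H' = [fset (Posz 0, 0)].
  rewrite -bot; apply/fsetP => x; rewrite !inE.
  case: (eqVneq x p) => [-> | //]; rewrite /=.
  by apply/esym/negbTE; rewrite negb_and hp /=; lia.
have [w' [vw' sw' Ew']] := IH H' hc' pa' pb' pos' bot'.
set l := absz p.1.
have El : Posz l = p.1 by rewrite /l; have := pos p hp; lia.
have dhE : drop_height (drop_all (map Posz w')) (Posz l) = p.2.
  apply: dh_uniq.
    move=> q; rewrite Ew' in_fsetD1 => /andP [nq hq] hqc.
    rewrite El in hqc.
    have := mp q hq hqc.
    have := pa q p hq hp hqc.
    move: nq => /eqP nq h1 h2; rewrite ltn_neqAle h2 andbT; apply/eqP => e; exact: nq (h1 e).
  right; have [q hq [hqc hq2]] := pb p hp pp.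
  exists q; last by rewrite El.
  rewrite Ew' in_fsetD1 hq andbT; apply/negP => /eqP Eq; rewrite Eq in hq2; lia.
exists (rcons w' l); split.
- case/lastP: w' vw' sw' Ew' {dhE} => [//|u l'] vw' sw' Ew'.
  apply: valid_rcons2 => //; rewrite last_rcons /stepr.
  have [L1 L2 _] := LP (andP vw').2.
  set h' := drop_height _ (Posz l') in L1 L2.
  have tin : (Posz l', h') \in H' by rewrite -Ew' L1 inE eqxx.
  case: (boolP (concurrent (Posz l') p.1)) => hcon.
    by move: hcon; rewrite /concurrent -El; lia.
  have mt : maxb H (Posz l', h').
    apply/maxbP => r hr hrc.
    case: (eqVneq r p) => [Er | nr].
      by rewrite Er concC /= in hrc; rewrite hrc in hcon.
    by apply: L2 => //; rewrite Ew' in_fsetD1 nr hr.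
  have tH : (Posz l', h') \in H by move: tin; rewrite in_fsetD1 => /andP [].
  have := hmin' _ tH mt.
  rewrite -El /=; lia.
- by rewrite size_rcons sw'.
- move=> x; rewrite map_rcons da_rcons /Defs.drop inE dhE Ew' El -surjective_pairing.
  rewrite in_fsetD1.
  by case: (eqVneq x p) => [-> // | nx] /=.
Qed.

Lemma sig_eq (A : Type) (Q : A -> Prop) (a b : {x | Q x}) : proj1_sig a = proj1_sig b -> a = b.
Proof.
case: a => a qa; case: b => b qb /= E; subst b.
by rewrite (ProofIrrelevance.proof_irrelevance _ qa qb).
Qed.

Lemma pos_valid m x : 1 <= m -> positive_string m x -> valid (enc 0 x) /\ size (enc 0 x) = m.
Proof.
move=> hm hp; have [hd hs] := (pos_dyck m x).1 hp.
case: hp => /andP [_ /eqP hc] _.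
have sz : size (enc 0 x) = m by rewrite enc_size hc.
split=> //; rewrite /valid enc_sorted andbT.
case E: (enc 0 x) => [|a w]; first by move: sz; rewrite E /=; lia.
by have := enc_head E; rewrite /=; case: a {E}.
Qed.

Lemma valid_pos w : valid w -> positive_string (size w) (D 0 w) /\ enc 0 (D 0 w) = w.
Proof.
case/andP=> hh hs.
have hd : forall a w', w = a :: w' -> a <= 0 by move=> a w' E; rewrite E in hh; move: hh => /= /eqP ->.
have [h1 h2 h3] := D_spec hs hd.
split=> //; apply/pos_dyck; split=> //.
Qed.

Theorem lemma2 (m : nat) (hm : 1 <= m) :
  exists f : PosString m -> RightPyramid m, bijective f.
Proof.
pose F (x : seq bool) : {fset P} := [fset p | p in drop_all (map Posz (enc 0 x))].
have hf : forall x : PosString m, is_right0pyramid (F (proj1_sig x)) /\ size_heap (F (proj1_sig x)) = m.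
  move=> [x px] /=; have [v s] := pos_valid hm px.
  by have [h1 h2] := valid_pyr v; split=> //; rewrite /F h2 s.
pose f (x : PosString m) : RightPyramid m := exist _ (F (proj1_sig x)) (hf x).
have finj : forall x1 x2, f x1 = f x2 -> x1 = x2.
  move=> x1 x2 E; have E' : F (proj1_sig x1) = F (proj1_sig x2) by exact: (congr1 (@proj1_sig _ _) E).
  case: x1 x2 E E' => [x1 p1] [x2 p2] _ /= E'.
  apply: sig_eq => /=.
  have [v1 s1] := pos_valid hm p1; have [v2 s2] := pos_valid hm p2.
  have Ew : enc 0 x1 = enc 0 x2.
    apply: (@inj_words m.-1) => //; try (rewrite ?s1 ?s2; lia).
    by move=> p; have := congr1 (fun H : {fset P} => p \in H) E'; rewrite /F !inE.
  have [d1 _] := (pos_dyck m x1).1 p1; have [d2 _] := (pos_dyck m x2).1 p2.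
  by rewrite -(dec_enc d1) Ew (dec_enc d2).
have fsurj : forall y, exists x, f x = y.
  move=> [H [[[[ds hds] hb1] [hb2 hpos]] hsz]].
  have [_ _ iA iB] := da_inv ds.
  have pa : PA H by move=> p q; rewrite -hds !inE; exact: iA.
  have pb : PB H.
    move=> p; rewrite -hds inE => hp pp; have [q hq hq2] := iB p hp pp.
    by exists q => //; rewrite inE.
  have hc : #|` H| = (m.-1).+1 by move: hsz; rewrite /size_heap; lia.
  have [w [vw sw Ew]] := surj_words hc pa pb hpos hb2.
  have [px ex] := valid_pos vw.
  rewrite sw (_ : m.-1.+1 = m) in px; last lia.
  exists (exist _ (D 0 w) px); apply: sig_eq => /=.
  rewrite /F ex; apply/fsetP => p; by rewrite inE Ew.
pose g (y : RightPyramid m) : PosString m :=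
  proj1_sig (ClassicalEpsilon.constructive_indefinite_description _ (fsurj y)).
exists f; exists g.
- move=> x; apply: finj; rewrite /g.
  by case: (ClassicalEpsilon.constructive_indefinite_description _ _).
- move=> y; rewrite /g.
  by case: (ClassicalEpsilon.constructive_indefinite_description _ _).
Qed.
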